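(* Assume $\mu(\partial A)=0$ for every $\sigma$-invariant probability measure $\mu$. Then for every $v>0$ there exists $M=M(v)$ such that for every $m\ge M$, $$\Phi_{\mathcal{D}_m}(v):=\lim_{n\to\infty}\frac1n\log\mu_\phi\left\{\frac{r_{\mathcal{D}_m}^n}{n}\le v\right\}=-\infty.$$
   Context: $(\Sigma,\sigma)$ is a two-sided mixing subshift of finite type on $\{1,\dots,N\}$, $\phi:\Sigma\to\mathbb{R}$ Hölder continuous with unique equilibrium state $\mu_\phi$. $A\subset\Sigma$ is an open set, $\partial A=\overline A\cap\overline{\Sigma\setminus A}$. An $m$-cylinder is $\{x:x_j=i_j,\ -m\le j\le m\}$; $\mathcal{B}_m$ (resp. $\mathcal{C}_m$) is the largest (resp. smallest) union of $m$-cylinders contained in (resp. containing) $A$; $\mathcal{D}_m=\mathcal{C}_m\setminus\mathcal{B}_m$. For $D\subset\Sigma$, $r_D(x)$ is the smallest integer $n\ge1$ with $\sigma^nx\in D$ ($+\infty$ if none), $r_D^1=r_D$, $r_D^{n+1}=r_D^n+r_D\circ\sigma^{r_D^n}$. The claim includes that the limit exists and equals $-\infty$. *)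

(* Defs.v *)
From HB Require Import structures.
From mathcomp Require Import all_boot all_order all_algebra.
From mathcomp Require Import all_classical all_reals all_analysis.

Set Implicit Arguments.
Unset Strict Implicit.
Unset Printing Implicit Defensive.

Import Order.TTheory GRing.Theory Num.Theory numFieldNormedType.Exports.
Local Open Scope classical_set_scope.
Local Open Scope ring_scope.

(* Bi-infinite sequences over the alphabet 'I_N.+1 (= {1,...,N+1} relabelled). *)
Definition seqsp (N : nat) := int -> 'I_N.+1.
HB.instance Definition _ N := gen_eqMixin (seqsp N).
HB.instance Definition _ N := gen_choiceMixin (seqsp N).
HB.instance Definition _ N := isPointed.Build (seqsp N) (fun _ => ord0).

Definition agree N (m : nat) (x y : seqsp N) : Prop :=
  forall j : int, `|j| <= m%:Z -> x j = y j.

(* finite cylinders of the full shift generate the (Borel) sigma-algebra *)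
Definition cyl_gen N : set (set (seqsp N)) :=
  [set C | exists (m : nat) (w : seqsp N), C = [set x | agree m x w]].

Definition X N := g_sigma_algebraType (@cyl_gen N).

Definition shift N (x : X N) : X N := fun i => x (i + 1).

Definition SFT N (L : nat) (W : pred {ffun 'I_L -> 'I_N.+1}) : set (X N) :=
  [set x | forall i : int, W [ffun k : 'I_L => x (i + (k : nat)%:Z)]].

(* topological mixing of the (shift-invariant) set S, in terms of the
   cylinder base of the product topology *)
Definition mixing N (S : set (X N)) : Prop :=
  forall x y, S x -> S y -> forall m : nat, exists K : nat, forall k : nat,
    (K <= k)%N -> exists z, S z /\ agree m z x /\ agree m (iter k (@shift N) z) y.

(* Hoelder continuity on S w.r.t. the metric d(x,y) = 2^{-max{k | x,y agree on [-k,k]}} *)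
Definition holder (R : realType) N (S : set (X N)) (phi : X N -> R) : Prop :=
  exists (C theta : R), 0 < theta < 1 /\
    forall x y, S x -> S y -> forall k : nat, agree k x y ->
      `|phi x - phi y| <= C * theta ^+ k.

Definition cyl N (S : set (X N)) (m : nat) (w : X N) : set (X N) :=
  [set x | S x /\ agree m x w].

Definition open_in N (S A : set (X N)) : Prop :=
  A `<=` S /\ forall x, A x -> exists m, cyl S m x `<=` A.
Definition closure_in N (S A : set (X N)) : set (X N) :=
  [set x | S x /\ forall m, cyl S m x `&` A !=set0].
Definition boundary_in N (S A : set (X N)) : set (X N) :=
  closure_in S A `&` closure_in S (S `\` A).

Definition Bm N (S A : set (X N)) (m : nat) : set (X N) :=
  \bigcup_(C in [set C | range (cyl S m) C /\ C `<=` A]) C.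
Definition Cm N (S A : set (X N)) (m : nat) : set (X N) :=
  \bigcup_(C in [set C | range (cyl S m) C /\ C `&` A !=set0]) C.
Definition Dm N (S A : set (X N)) (m : nat) : set (X N) :=
  Cm S A m `\` Bm S A m.

(* first return time r_D (None = +infinity) *)
Definition ret_time N (D : set (X N)) (x : X N) : option nat :=
  match pselect (exists k, (0 < k)%N && `[< D (iter k (@shift N) x) >]) with
  | left h => Some (ex_minn h)
  | right _ => None
  end.

Fixpoint ret_iter N (D : set (X N)) (n : nat) (x : X N) : option nat :=
  match n with
  | 0 => Some 0%N
  | n'.+1 => match ret_iter D n' x with
             | Some t => omap (addn t) (ret_time D (iter t (@shift N) x))
             | None => None
             end
  end.

Definition ret_le (R : realType) N (D : set (X N)) (n : nat) (v : R) : set (X N) :=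
  [set x | exists t : nat, ret_iter D n x = Some t /\ (t%:R <= v * n%:R)].

Definition shift_invariant (R : realType) N (mu : {measure set (X N) -> \bar R}) : Prop :=
  forall E : set (X N), measurable E -> mu ((@shift N) @^-1` E) = mu E.

Definition is_partition N (k : nat) (P : 'I_k -> set (X N)) : Prop :=
  (forall i, measurable (P i)) /\
  (forall i j, i != j -> P i `&` P j = set0) /\
  (forall x, exists i, P i x).

(* the atom of the join P v sigma^-1 P v ... v sigma^-(n-1) P with itinerary w *)
Definition join_cell N (k n : nat) (P : 'I_k -> set (X N))
  (w : {ffun 'I_n -> 'I_k}) : set (X N) :=
  [set x | forall i : 'I_n, P (w i) (iter i (@shift N) x)].

Definition eta_fun (R : realType) (t : R) : R :=
  if t == 0 then 0 else - (t * ln t).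

Definition H_join (R : realType) N (mu : {measure set (X N) -> \bar R})
  (k : nat) (P : 'I_k -> set (X N)) (n : nat) : R :=
  \sum_(w : {ffun 'I_n -> 'I_k}) eta_fun (fine (mu (join_cell P w))).

Definition entropy_part (R : realType) N (mu : {measure set (X N) -> \bar R})
  (k : nat) (P : 'I_k -> set (X N)) : R :=
  limn (fun n : nat => H_join mu P n / n%:R).

Definition ks_entropy (R : realType) N (mu : {measure set (X N) -> \bar R}) : \bar R :=
  ereal_sup [set e | exists (k : nat) (P : 'I_k -> set (X N)),
    is_partition P /\ e = (entropy_part mu P)%:E].

Definition equilibrium_state (R : realType) N (S : set (X N)) (phi : X N -> R)
  (mu : probability (X N) R) : Prop :=
  shift_invariant mu /\ mu S = 1%E /\
  forall nu : probability (X N) R, shift_invariant nu -> nu S = 1%E ->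
    (ks_entropy nu + \int[nu]_(x in S) (phi x)%:E <=
     ks_entropy mu + \int[mu]_(x in S) (phi x)%:E)%E.

Definition elog (R : realType) (a : \bar R) : \bar R :=
  if a == 0%E then -oo%E else (ln (fine a))%:E.

(* Main.v *)
Require Import Defs.
From HB Require Import structures.
From mathcomp Require Import all_boot all_order all_algebra.
From mathcomp Require Import all_classical all_reals all_analysis.
From mathcomp Require Import zify ring lra.
Import Order.TTheory GRing.Theory Num.Theory.
Local Open Scope classical_set_scope.
Local Open Scope ring_scope.

Set Implicit Arguments.
Unset Strict Implicit.
Unset Printing Implicit Defensive.

Section P1.
Variable N : nat.
Implicit Types x y z : X N.

Lemma agree_refl m x : agree m x x.
Proof. by []. Qed.
Lemma agree_sym m x y : agree m x y -> agree m y x.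
Proof. by move=> h j hj; rewrite h. Qed.
Lemma agree_trans m x y z : agree m x y -> agree m y z -> agree m x z.
Proof. by move=> h1 h2 j hj; rewrite h1 // h2. Qed.
Lemma agree_le m m' x y : (m <= m')%N -> agree m' x y -> agree m x y.
Proof.
move=> mm' h j hj; apply: h; apply: (le_trans hj); by rewrite lez_nat.
Qed.

Definition code (j : nat) x : {ffun 'I_(j.*2.+1) -> 'I_N.+1} :=
  [ffun i : 'I_(j.*2.+1) => x ((i : nat)%:Z - j%:Z)].

Lemma agree_code j x y : agree j x y <-> code j x = code j y.
Proof.
split.
  move=> h; apply/ffunP => i; rewrite !ffunE; apply: h.
  have := ltn_ord i; move: (nat_of_ord i) => n; rewrite -addnn => hi.
  rewrite ler_norml; apply/andP; split; lia.
move=> h k hk.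
have hk' := hk; rewrite ler_norml in hk'; case/andP: hk' => h1 h2.
have e : (absz (k + j%:Z))%:Z = k + j%:Z.
  by rewrite gez0_abs // -lerBlDr sub0r.
have lt : (absz (k + j%:Z)%R < j.*2.+1)%N.
  by rewrite -addnn; lia.
have := congr1 (fun f : {ffun _ -> _} => f (Ordinal lt)) h; rewrite !ffunE /= e.
by rewrite addrK.
Qed.

Definition wdet (j : nat) (E : set (X N)) := forall x y, agree j x y -> E x -> E y.

Lemma wdet_le j j' E : (j <= j')%N -> wdet j E -> wdet j' E.
Proof. by move=> jj' h x y a; apply: h; exact: agree_le a. Qed.

Lemma cyl_measurable j x : measurable ([set y | agree j y x] : set (X N)).
Proof. by apply: sub_sigma_algebra; exists j, x. Qed.

Lemma wdet_measurable j E : wdet j E -> measurable (E : set (X N)).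
Proof.
move=> hE.
have -> : E = \bigcup_(p in [set p | exists x, E x /\ code j x = p])
                 [set y : X N | code j y = p].
  apply/seteqP; split.
    by move=> x Ex; exists (code j x) => //; exists x.
  move=> y [p [x [Ex <-]]] /= e; apply: (hE x) => //; exact/agree_code.
apply: fin_bigcup_measurable; first exact: finite_finset.
move=> p [x [Ex <-]].
have -> : [set y : X N | code j y = code j x] = [set y | agree j y x].
  by apply/seteqP; split => y /= /agree_code.
exact: cyl_measurable.
Qed.

End P1.

Section P2.
Variable N L : nat.
Variable W : pred {ffun 'I_L -> 'I_N.+1}.
Implicit Types x y z : X N.
Local Notation SS := (SFT W).

Lemma iter_shiftE k x i : iter k (@Defs.shift N) x i = x (i + k%:Z).
Proof.
elim: k x i => [|k IH] x i /=; first by rewrite addr0.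
rewrite /Defs.shift IH; congr x; lia.
Qed.

Lemma iter_shiftD a b x : iter a (@Defs.shift N) (iter b (@Defs.shift N) x) = iter (a + b) (@Defs.shift N) x.
Proof. by rewrite iterD. Qed.

Lemma S_iter k x : SS (iter k (@Defs.shift N) x) <-> SS x.
Proof.
split => h i.
  have := h (i - k%:Z); congr W; apply/ffunP => l; rewrite !ffunE iter_shiftE.
  congr x; lia.
have := h (i + k%:Z); congr W; apply/ffunP => l; rewrite !ffunE iter_shiftE.
congr x; lia.
Qed.

Lemma wdet_iter j k E : wdet j E -> wdet (j + k) (fun x => E (iter k (@Defs.shift N) x)).
Proof.
move=> hE x y a; apply: hE => i hi; rewrite !iter_shiftE; apply: a; lia.
Qed.

Definition Sn (n : nat) : set (X N) :=
  [set x | forall i : int, `|i| <= n%:Z -> W [ffun k : 'I_L => x (i + (k : nat)%:Z)]].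

Lemma wdet_Sn n : wdet (n + L) (Sn n).
Proof.
move=> x y a h i hi; have := h i hi; congr W; apply/ffunP => k; rewrite !ffunE.
apply: a; have := ltn_ord k; move: (nat_of_ord k) => l hl; lia.
Qed.

Lemma S_bigcap : SS = \bigcap_n Sn n.
Proof.
apply/seteqP; split.
  by move=> x h n _ i _; exact: h.
move=> x h i; apply: (h (absz i)) => //; lia.
Qed.



Lemma measurable_S : measurable (SS : set (X N)).
Proof.
rewrite S_bigcap; apply: bigcapT_measurable => n.
exact (wdet_measurable (wdet_Sn (n:=n))).
Qed.

Lemma cyl_agree (m : nat) x w : agree m x w -> cyl SS m x = cyl SS m w.
Proof.
move=> a; apply/seteqP; split => y [Sy ay]; split => //.
  exact: agree_trans ay a.
exact: agree_trans ay (agree_sym a).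
Qed.

Variable A : set (X N).

Lemma Dm_char m x : Dm SS A m x <->
  [/\ SS x, cyl SS m x `&` A !=set0 & ~ (cyl SS m x `<=` A)].
Proof.
split.
  case=> [[C [[w _ <-] CA] Cx] nB]; case: Cx => Sx axw.
  rewrite (cyl_agree axw); split => // sub; apply: nB.
  by exists (cyl SS m w) => //; split => //; exists w.
case=> Sx CA nsub; split.
  by exists (cyl SS m x); [split => //; exists x|split].
case=> C [[w _ <-] sub] [_ axw]; apply: nsub; by rewrite (cyl_agree axw).
Qed.

Lemma Dm_anti m m' : (m <= m')%N -> Dm SS A m' `<=` Dm SS A m.
Proof.
move=> mm' x /Dm_char [Sx [y [[Sy ay] Ay]] nsub]; apply/Dm_char; split => //.
  by exists y; split => //; split => //; exact: agree_le ay.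
move=> sub; apply: nsub => z [Sz az]; apply: sub; split => //; exact: agree_le az.
Qed.

Lemma boundary_bigcap : boundary_in SS A = \bigcap_m Dm SS A m.
Proof.
apply/seteqP; split.
  move=> x [[Sx cA] [_ cnA]] m _; apply/Dm_char; split => //.
  move=> sub; have [y [yc [_ nAy]]] := cnA m; exact: nAy (sub _ yc).
move=> x h; have [Sx _ _] := (Dm_char _ _).1 (h 0%N I).
split; split => // m; have [_ h1 h2] := (Dm_char _ _).1 (h m I) => //.
apply: contrapT => hn; apply: h2 => y yc; apply: contrapT => nAy; apply: hn.
by exists y; split => //; split => //; case: yc.
Qed.

Definition Dp (m : nat) : set (X N) := [set y | exists x, Dm SS A m x /\ agree m y x].

Lemma wdet_Dp m : wdet m (Dp m).
Proof.
move=> y z a [x [Dx ax]]; exists x; split => //.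
exact: agree_trans (agree_sym a) ax.
Qed.

Lemma Dm_Dp m : Dm SS A m = SS `&` Dp m.
Proof.
apply/seteqP; split.
  move=> x Dx; split; first by case/Dm_char: Dx.
  by exists x.
move=> y [Sy [x [/Dm_char [Sx h1 h2] ayx]]]; apply/Dm_char.
have e : cyl SS m y = cyl SS m x by exact: cyl_agree.
by rewrite e.
Qed.

Lemma Dp_anti m m' : (m <= m')%N -> Dp m' `<=` Dp m.
Proof.
move=> mm' y [x [Dx a]]; exists x; split; first exact: Dm_anti Dx.
exact: agree_le a.
Qed.

Lemma measurable_Dm_iter m k :
  measurable ([set x | Dm SS A m (iter k (@Defs.shift N) x)] : set (X N)).
Proof.
have -> : [set x | Dm SS A m (iter k (@Defs.shift N) x)] =
   SS `&` [set x | Dp m (iter k (@Defs.shift N) x)].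
  apply/seteqP; split => x /=; rewrite Dm_Dp.
    by case=> /S_iter.
  by case=> Sx Dx; split => //; apply/S_iter.
apply: measurableI; first exact: measurable_S.
exact (wdet_measurable (wdet_iter (k:=k) (wdet_Dp (m:=m)))).
Qed.

End P2.

Section P3.
Variable N : nat.
Variable D : set (X N).
Local Notation sh := (@Defs.shift N).
Implicit Types x y : X N.

Lemma ret_timeP y r : ret_time D y = Some r <->
  [/\ (0 < r)%N, D (iter r sh y) & forall k, (0 < k < r)%N -> ~ D (iter k sh y)].
Proof.
rewrite /ret_time; case: pselect => [h|h].
  case: ex_minnP => r0 /andP[r0pos /asboolP Dr] minr; split.
    case=> <-; split => // k /andP[k0 kr] Dk.
    have := minr k; rewrite k0 /= => /(_ (asboolT Dk)); rewrite leqNgt kr.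
    by [].
  case=> rpos Dyr hmin; congr Some.
  have h1 : (r0 <= r)%N by apply: minr; rewrite rpos; exact: asboolT.
  have h2 : ~ (r0 < r)%N by move=> lt; apply: (hmin r0) => //; rewrite r0pos lt.
  lia.
split => //; case=> rpos Dr _; exfalso; apply: h; exists r.
by rewrite rpos; exact: asboolT.
Qed.

Hypothesis hD : forall k, measurable ([set x | D (iter k sh x)] : set (X N)).

Lemma measurable_ret_time s r :
  measurable ([set x | ret_time D (iter s sh x) = Some r] : set (X N)).
Proof.
have -> : [set x | ret_time D (iter s sh x) = Some r] =
  [set _ : X N | (0 < r)%N] `&` [set x | D (iter (r + s) sh x)] `&`
  ~` \bigcup_(k in [set k | (0 < k < r)%N]) [set x | D (iter (k + s) sh x)].
  apply/seteqP; split => x /=.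
    move/ret_timeP => [r0 Dr hmin]; split; first by split => //; rewrite iterD.
    by case=> k /= kr; rewrite iterD; exact: hmin.
  case=> [[r0 Dr] nU]; apply/ret_timeP; split => //; first by rewrite -iterD.
  by move=> k kr Dk; apply: nU; exists k => //; rewrite /= iterD.
apply: measurableI; first apply: measurableI.
- case: (0 < r)%N.
    by have -> : [set _ : X N | true] = setT by apply/seteqP; split.
  by have -> : [set _ : X N | false] = set0 by apply/seteqP; split.
- exact: hD.
- by apply: measurableC; apply: bigcup_measurable => k _; exact: hD.
Qed.

Lemma measurable_ret_iter n t :
  measurable ([set x | ret_iter D n x = Some t] : set (X N)).
Proof.
elim: n t => [|n IH] t /=.
  case: (eqVneq t 0%N) => [->|tn].
    by have -> : [set _ : X N | Some 0%N = Some 0%N] = setT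
      by apply/seteqP; split.
  have -> : [set _ : X N | Some 0%N = Some t] = set0; last exact: measurable0.
  by apply/seteqP; split => // x /= [e]; move: tn; rewrite -e eqxx.
have -> : [set x | match ret_iter D n x with
                   | Some t0 => omap (addn t0) (ret_time D (iter t0 sh x))
                   | None => None end = Some t] =
  \bigcup_(t0 in [set t0 | (t0 <= t)%N])
     ([set x | ret_iter D n x = Some t0] `&`
      [set x | ret_time D (iter t0 sh x) = Some (t - t0)%N]).
  apply/seteqP; split => x /=.
    case e : (ret_iter D n x) => [t0|//].
    case e2 : (ret_time D (iter t0 sh x)) => [r|//] /= [<-].
    by exists t0; [rewrite /= leq_addr|split => //; rewrite addKn].
  move=> [t0 /= t0t [e e2]]; rewrite e e2 /=; congr Some; lia.
apply: bigcup_measurable => t0 _; apply: measurableI; first exact: IH.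
exact: measurable_ret_time.
Qed.

Lemma measurable_ret_le (R : realType) n (v : R) :
  measurable (ret_le D n v : set (X N)).
Proof.
have -> : ret_le D n v = \bigcup_(t in [set t : nat | t%:R <= v * n%:R])
                           [set x | ret_iter D n x = Some t].
  by apply/seteqP; split => x /= [t [e le]]; exists t.
by apply: bigcup_measurable => t _; exact: measurable_ret_iter.
Qed.

End P3.

Section P3b.
Variable N : nat.
Variable D : set (X N).
Local Notation sh := (@Defs.shift N).

Definition cnt x (T : nat) : nat :=
  (\sum_(0 <= k < T) (`[< D (iter k sh x) >] : nat))%N.

Lemma cnt_mono x T T' : (T <= T')%N -> (cnt x T <= cnt x T')%N.
Proof.
move=> le; rewrite /cnt (@big_cat_nat _ _ _ T 0 T' _ _ (leq0n T) le) /=; exact: leq_addr.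
Qed.

Lemma cnt_le x T : (cnt x T <= T)%N.
Proof.
rewrite /cnt -[X in (_ <= X)%N](card_ord T) -sum1_card big_mkord.
by apply: leq_sum => i _; case: asboolP.
Qed.

Lemma ret_iter_cnt n x t : ret_iter D n x = Some t -> (n <= cnt x t.+1)%N.
Proof.
elim: n t => [|n IH] t //=.
case e : (ret_iter D n x) => [t0|//].
case e2 : (ret_time D (iter t0 sh x)) => [r|//] /= [<-].
have := IH _ e; move/ret_timeP: e2 => [r0 Dr _] h.
rewrite -iterD addnC in Dr.
rewrite /cnt big_nat_recr //= -/(cnt x (t0 + r)).
rewrite (asboolT Dr) addn1 ltnS; apply: (leq_trans h); apply: cnt_mono; lia.
Qed.

End P3b.

Section P4.
Variable N : nat.
Implicit Types x y z w : X N.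

Section fip.
Variable K : nat -> set (X N).
Hypothesis Kw : forall n, exists j, wdet j (K n).
Hypothesis Kdec : forall n n', (n <= n')%N -> K n' `<=` K n.
Hypothesis Kne : forall n, K n !=set0.

Lemma fip_step (P : set (X N)) (j : nat) :
  (forall n, exists y, K n y /\ P y) ->
  exists w, P w /\ forall n, exists y, [/\ K n y, P y & agree j y w].
Proof.
move=> hP; apply: contrapT => hn.
have h1 : forall w, exists n, P w -> forall y, K n y -> P y -> ~ agree j y w.
  move=> w; apply: contrapT => hw; apply: hn; exists w.
  have Pw : P w.
    by apply: contrapT => nPw; apply: hw; exists 0%N => /nPw.
  split => // n; apply: contrapT => hy; apply: hw; exists n => _ y Ky Py ay.
  by apply: hy; exists y.
have [f hf] := choice h1.
pose g (p : {ffun 'I_(j.*2.+1) -> 'I_N.+1}) :=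
  f (xget (point : X N) [set w : X N | P w /\ code j w = p]).
pose B := (\max_p g p)%N.
have [y [Ky Py]] := hP B.
have hx : [set w : X N | P w /\ code j w = code j y] (xget (point : X N)
             [set w : X N | P w /\ code j w = code j y]).
  by apply: xgetPex; exists y.
case: hx => Pw ew.
set w := xget _ _ in Pw ew.
have := hf w Pw y; apply.
- apply: (Kdec (n:=g (code j y)) (n':=B)) Ky.
  exact: (leq_bigmax (code j y)).
- exact: Py.
- by apply/agree_code; rewrite ew.
Qed.

Lemma fip : exists x, forall n, K n x.
Proof.
pose G j w := forall n, exists y, K n y /\ agree j y w.
have step : forall j w, exists w', G j w -> agree j w' w /\ G j.+1 w'.
  move=> j w; apply: contrapT => hn.
  have Gw : G j w by apply: contrapT => nG; apply: hn; exists w.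
  have [w' [aw' hw']] := fip_step (P := [set y | agree j y w]) j.+1 Gw.
  apply: hn; exists w' => _; split => // n; have [y [Ky _ ay]] := hw' n.
  by exists y.
have [F hF] := choice (fun jw : nat * X N => step jw.1 jw.2).
have [w0 [_ hw0]] := fip_step (P := setT) 0%N
  (fun n => let: exist y Ky := cid (Kne n) in ex_intro _ y (conj Ky I)).
pose fix sq (j : nat) : X N := if j is j'.+1 then F (j', sq j') else w0.
have Gsq : forall j, G j (sq j) /\ agree j (sq j.+1) (sq j).
  elim=> [|j [IH _]].
    have G0 : G 0%N w0 by move=> n; have [y [Ky _ ay]] := hw0 n; exists y.
    by split => //; exact: (hF (0%N, w0) G0).1.
  have [a1 G1] := hF (j, sq j) IH.
  by split => //; exact: (hF (j.+1, sq j.+1) G1).1.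
have chain : forall j k, (j <= k)%N -> agree j (sq k) (sq j).
  move=> j k /subnK <-; elim: (k - j)%N => [|d IH] //=.
  apply: agree_trans _ IH.
  by apply: agree_le (Gsq _).2; rewrite leq_addl.
pose x : X N := fun i => sq (absz i) i.
have ax : forall j, agree j x (sq j).
  move=> j i hi; rewrite /x.
  have h := chain (absz i) j ltac:(lia).
  by symmetry; apply: h; lia.
exists x => n; have [j hj] := Kw n.
have [y [Ky ay]] := (Gsq j).1 n.
apply: (hj y) => //; exact: agree_trans ay (agree_sym (ax j)).
Qed.

End fip.

Definition clo : set (set (X N)) := [set E | exists j, wdet j E].

Lemma clo0 : clo set0. Proof. by exists 0%N. Qed.
Lemma cloC E : clo E -> clo (~` E).
Proof. by move=> [j h]; exists j => x y a nEx Ey; apply: nEx; exact: h (agree_sym a) Ey. Qed.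
Lemma cloU E F : clo E -> clo F -> clo (E `|` F).
Proof.
move=> [j hE] [k hF]; exists (maxn j k) => x y a [Ex|Fx].
  by left; apply: (hE x) => //; apply: agree_le a; exact: leq_maxl.
by right; apply: (hF x) => //; apply: agree_le a; exact: leq_maxr.
Qed.
Lemma cloI E F : clo E -> clo F -> clo (E `&` F).
Proof.
by move=> cE cF; rewrite -[E]setCK -[F]setCK -setCU; apply/cloC/cloU; apply: cloC.
Qed.
Lemma cloT : clo setT. Proof. by rewrite -setC0; apply/cloC/clo0. Qed.
Lemma clo_bigsetU (E : nat -> set (X N)) n : (forall i, clo (E i)) ->
  clo (\big[setU/set0]_(i < n) E i).
Proof. by move=> h; elim/big_ind: _ => //; [exact: clo0|exact: cloU]. Qed.

Lemma clo_finite (E : nat -> set (X N)) : (forall i, clo (E i)) ->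
  trivIset setT E -> clo (\bigcup_i E i) ->
  exists n, forall i, (n <= i)%N -> E i = set0.
Proof.
move=> cE tE cU; apply: contrapT => hn.
pose K n := \bigcup_i E i `\` \big[setU/set0]_(i < n) E i.
have Kc n : clo (K n) by rewrite /K setDE; apply: cloI => //; apply/cloC/clo_bigsetU.
have Kdec n n' : (n <= n')%N -> K n' `<=` K n.
  move=> le x [Ux nx]; split => //; rewrite -bigcup_mkord in nx *.
  rewrite -bigcup_mkord; move=> [i iln Ei]; apply: nx; exists i => //=; exact: leq_trans iln le.
have Kne n : K n !=set0.
  apply: contrapT => hK; apply: hn; exists n => i ni.
  apply/seteqP; split => // x Ex; apply: hK; exists x; split; first by exists i.
  rewrite -bigcup_mkord => -[k kn Ek].
  have := (trivIsetP.1 tE) k i I I; rewrite neq_ltn (leq_trans kn ni) /= => /(_ isT).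
  by move/seteqP => [+ _] => /(_ x (conj Ek Ex)).
have [x hx] := fip (K := K) Kc Kdec Kne.
have [[i _ Ei] _] := hx 0%N.
have [_ nx] := hx i.+1; apply: nx.
by rewrite -bigcup_mkord; exists i => //=.
Qed.

End P4.

Import numFieldNormedType.Exports.

Lemma exists_ultra : exists U : set_system nat, UltraFilter U /\ (\oo `<=` U).
Proof. exact: ultraFilterLemma. Qed.

Section ulim.
Variable R : realType.
Variable U : set_system nat.
Hypothesis hU : UltraFilter U.
Hypothesis hoo : \oo `<=` U.

Lemma near_oo_U (P : nat -> Prop) : (\forall n \near \oo, P n) -> U P.
Proof. exact: hoo. Qed.

Lemma ucvg (a : nat -> R) (lo hi : R) : (forall n, lo <= a n <= hi) ->
  exists l : R, a @ U --> l.
Proof.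
move=> hb.
have Fc : (a @ U) `[lo, hi]%classic.
  have UF : Filter U by apply: ultra_proper.
  rewrite /fmap /=; apply: (@filterS _ U UF setT); last exact: filterT.
  by move=> n _ /=; rewrite in_itv /=; exact: hb.
have [p [_ cp]] := @segment_compact R lo hi (a @ U) _ Fc.
exists p => B Bp; case: (in_ultra_setVsetC (a @^-1` B) hU) => // hc.
have [z [/= nBz Bz]] := cp (~` B) B hc Bp.
by [].
Qed.

Definition ulim (a : nat -> R) : R := lim (a @ U).

Lemma ulimE (a : nat -> R) l : a @ U --> l -> ulim a = l.
Proof. exact: cvg_lim. Qed.

Lemma ulimP (a : nat -> R) lo hi : (forall n, lo <= a n <= hi) -> a @ U --> ulim a.
Proof. by move=> /ucvg [l al]; rewrite (ulimE al). Qed.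

Lemma ulimD (a b : nat -> R) lo hi lo' hi' : (forall n, lo <= a n <= hi) ->
  (forall n, lo' <= b n <= hi') -> ulim (a \+ b) = ulim a + ulim b.
Proof.
move=> ha hb; apply: ulimE; apply: cvgD; [exact: ulimP ha|exact: ulimP hb].
Qed.

Lemma ulim_cst (c : R) : ulim (fun _ => c) = c.
Proof. by apply: ulimE; exact: cvg_cst. Qed.

Lemma ulim_ge (a : nat -> R) lo hi c : (forall n, lo <= a n <= hi) ->
  (\forall n \near \oo, c <= a n) -> c <= ulim a.
Proof.
move=> ha hc; apply: (@closed_cvg _ _ U _ a [set x | c <= x]) (ulimP ha).
  exact: closed_ge.
exact: near_oo_U.
Qed.

Lemma ulim_le (a : nat -> R) lo hi c : (forall n, lo <= a n <= hi) ->
  (\forall n \near \oo, a n <= c) -> ulim a <= c.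
Proof.
move=> ha hc; apply: (@closed_cvg _ _ U _ a [set x | x <= c]) (ulimP ha).
  exact: closed_le.
exact: near_oo_U.
Qed.

End ulim.

Import numFieldNormedType.Exports.

Section P6.
Variable R : realType.
Variable N : nat.
Variable U : set_system nat.
Hypothesis hU : UltraFilter U.
Hypothesis hoo : \oo `<=` U.
Variable y : nat -> X N.
Variable T : nat -> nat.
Hypothesis hT : forall k, (k < T k)%N.
Local Notation sh := (@Defs.shift N).

Lemma T_pos k : (0 < T k)%N. Proof. exact: leq_ltn_trans (hT k). Qed.

Definition freq (E : set (X N)) (k : nat) : R := (cnt E (y k) (T k))%:R / (T k)%:R.

Lemma freq_bnd E k : 0 <= freq E k <= 1.
Proof.
rewrite /freq divr_ge0 //= ler_pdivrMr ?ltr0n ?T_pos // mul1r ler_nat.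
exact: cnt_le.
Qed.

Lemma cnt_sub (E F : set (X N)) x t : E `<=` F -> (cnt E x t <= cnt F x t)%N.
Proof.
move=> EF; rewrite /cnt; apply: leq_sum => i _.
by case: asboolP => // /EF h; rewrite (asboolT h).
Qed.

Lemma cnt_U (E F : set (X N)) x t : E `&` F = set0 ->
  cnt (E `|` F) x t = (cnt E x t + cnt F x t)%N.
Proof.
move=> EF; rewrite /cnt -big_split /=; apply: eq_bigr => i _.
rewrite asbool_or; case: asboolP => hE; case: asboolP => hF //=.
by move: EF => /seteqP [/(_ _ (conj hE hF))].
Qed.

Lemma cnt_set0 x t : cnt (set0 : set (X N)) x t = 0%N.
Proof. by rewrite /cnt big1 // => i _; rewrite asboolF. Qed.

Lemma cnt_setT x t : cnt (setT : set (X N)) x t = t.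
Proof.
rewrite /cnt (eq_bigr (fun _ => 1%N)); first by rewrite sum_nat_const_nat muln1 subn0.
by move=> i _; rewrite asboolT.
Qed.

Definition lam (E : set (X N)) : R := ulim U (freq E).

Lemma lam_bnd E : 0 <= lam E <= 1.
Proof.
apply/andP; split.
  by apply: (ulim_ge hU hoo (lo:=0) (hi:=1)) => //; [exact: freq_bnd|near=> k; case/andP: (freq_bnd E k)].
by apply: (ulim_le hU hoo (lo:=0) (hi:=1)) => //; [exact: freq_bnd|near=> k; case/andP: (freq_bnd E k)].
Unshelve. all: by end_near. Qed.

Lemma lamU E F : E `&` F = set0 -> lam (E `|` F) = lam E + lam F.
Proof.
move=> EF; rewrite /lam -(ulimD hU (@freq_bnd E) (@freq_bnd F)).
congr ulim; apply/funext => k; rewrite /freq cnt_U // natrD mulrDl.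
by [].
Qed.

Lemma lam0 : lam set0 = 0.
Proof.
rewrite /lam (_ : freq set0 = fun _ => 0) ?ulim_cst //.
by apply/funext => k; rewrite /freq cnt_set0 mul0r.
Qed.

Lemma lamT : lam setT = 1.
Proof.
rewrite /lam (_ : freq setT = fun _ => 1) ?ulim_cst //.
by apply/funext => k; rewrite /freq cnt_setT divff // pnatr_eq0 -lt0n T_pos.
Qed.

Lemma lam_ge E c : (\forall k \near \oo, c <= freq E k) -> c <= lam E.
Proof. by move=> h; apply: (ulim_ge hU hoo (lo:=0) (hi:=1)) => //; exact: freq_bnd. Qed.

Lemma lam_le E c : (\forall k \near \oo, freq E k <= c) -> lam E <= c.
Proof. by move=> h; apply: (ulim_le hU hoo (lo:=0) (hi:=1)) => //; exact: freq_bnd. Qed.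

Lemma cnt_shift (E : set (X N)) x t :
  (cnt [set z | E (sh z)] x t + `[< E x >] = cnt E x t + `[< E (iter t sh x) >])%N.
Proof.
rewrite /cnt; elim: t => [|t IH]; first by rewrite !big_geq.
rewrite !big_nat_recr //= -!addnA (addnC `[< E (sh _) >]) addnA IH -addnA.
by congr (_ + _)%N; rewrite addnC.
Qed.

Lemma freq_shift_diff E k :
  `|freq [set z | E (sh z)] k - freq E k| <= (T k)%:R^-1.
Proof.
have h := cnt_shift E (y k) (T k).
rewrite /freq -mulrBl normrM [X in _ * X]ger0_norm ?invr_ge0 ?ler0n //.
apply: ler_piMl; first by rewrite invr_ge0 ler0n.
move: h; set a := cnt _ _ _; set b := cnt _ _ _ => h.
have h1 : (a%:R <= b%:R + 1 :> R).
  by rewrite natr1 ler_nat; move: h; case: asboolP; case: asboolP => _ _ /=; lia.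
have h2 : (b%:R <= a%:R + 1 :> R).
  by rewrite natr1 ler_nat; move: h; case: asboolP; case: asboolP => _ _ /=; lia.
rewrite ler_norml; apply/andP; split; lra.
Qed.

Lemma Tinv_small (e : R) : 0 < e -> \forall k \near \oo, (T k)%:R^-1 <= e.
Proof.
move=> e0; near=> k.
have Tp : (0 : R) < (T k)%:R by rewrite ltr0n T_pos.
rewrite invf_ple ?posrE //; apply: ltW; apply: (le_lt_trans (y := k%:R)).
  by near: k; exact: nbhs_infty_ger.
by rewrite ltr_nat.
Unshelve. all: by end_near. Qed.

Lemma lam_shift E : lam [set z | E (sh z)] = lam E.
Proof.
pose d k := freq [set z | E (sh z)] k - freq E k.
have db k : -1 <= d k <= 1.
  have := freq_bnd [set z | E (sh z)] k; have := freq_bnd E k.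
  rewrite /d => /andP[? ?] /andP[? ?]; apply/andP; split; lra.
rewrite /lam; have -> : freq [set z | E (sh z)] = freq E \+ d.
  by apply/funext => k; rewrite /d /= addrC subrK.
rewrite (ulimD hU (@freq_bnd E) db).
suff -> : ulim U d = 0 by rewrite addr0.
have hd : forall e : R, 0 < e -> -e <= ulim U d <= e.
  move=> e e0; apply/andP; split.
    apply: (ulim_ge hU hoo db); near=> k.
    have := freq_shift_diff E k; rewrite -/(d k) ler_norml => /andP[h _].
    apply: le_trans h; rewrite lerN2; near: k; exact: Tinv_small.
  apply: (ulim_le hU hoo db); near=> k.
  have := freq_shift_diff E k; rewrite -/(d k) ler_norml => /andP[_ h].
  apply: le_trans h _; near: k; exact: Tinv_small.
apply/eqP; rewrite eq_le; apply/andP; split.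
  apply/ler_addgt0Pr => e e0; rewrite add0r; by case/andP: (hd e e0).
apply/ler_addgt0Pr => e e0; have := hd e e0; case/andP => h _; lra.
Unshelve. all: by end_near. Qed.

End P6.

Import numFieldNormedType.Exports.

Definition CT (N : nat) : Type := seqsp N.
HB.instance Definition _ N := Pointed.copy (CT N) (seqsp N).

Definition cloCT N : set (set (CT N)) := fun E => @clo N E.

Lemma cloCT0 N : @cloCT N set0. Proof. exact: clo0. Qed.
Lemma cloCTU N : setU_closed (@cloCT N). Proof. by move=> A B; exact: cloU. Qed.
Lemma cloCTC N : setC_closed (@cloCT N). Proof. by move=> A; exact: cloC. Qed.

HB.instance Definition _ N := @isAlgebraOfSets.Build default_measure_display (CT N)
  (@cloCT N) (@cloCT0 N) (@cloCTU N) (@cloCTC N).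

Section P7.
Variable R : realType.
Variable N : nat.
Variable U : set_system nat.
Hypothesis hU : UltraFilter U.
Hypothesis hoo : \oo `<=` U.
Variable y : nat -> X N.
Variable T : nat -> nat.
Hypothesis hT : forall k, (k < T k)%N.
Local Notation sh := (@Defs.shift N).
Local Notation lm := (@lam R N U y T).

Definition lamE (E : set (CT N)) : \bar R := (lm E)%:E.

Lemma lamE0 : lamE set0 = 0%E.
Proof. by rewrite /lamE (lam0 R hU y T). Qed.

Lemma lamE_ge0 E : (0 <= lamE E)%E.
Proof. by rewrite /lamE lee_fin; case/andP: (@lam_bnd R N U hU hoo y T hT E). Qed.

Lemma lam_bigU (F : nat -> set (X N)) n : trivIset setT F ->
  lm (\big[setU/set0]_(i < n) F i) = \sum_(i < n) lm (F i).
Proof.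
move=> tF; elim: n => [|n IH]; first by rewrite !big_ord0 lam0.
rewrite !big_ord_recr /= lamU //; first by rewrite IH.
rewrite -bigcup_mkord setI_bigcupl; apply/seteqP; split => // x [i /= ilt [Fi Fn]].
have := (trivIsetP.1 tF) i n I I; rewrite neq_ltn ilt => /(_ isT).
by move/seteqP => [+ _] => /(_ x (conj Fi Fn)).
Qed.

Lemma lamE_sigma : semi_sigma_additive lamE.
Proof.
move=> F mF tF mUF.
have [n0 hn0] := clo_finite mF tF mUF.
apply: cvg_near_cst; near=> n.
rewrite big_mkord /lamE sumEFin -lam_bigU //; congr (_%:E); congr lm.
apply/seteqP; split.
  by rewrite -bigcup_mkord => x [i /= ilt Fi]; exists i.
move=> x [i _ Fi]; rewrite -bigcup_mkord; exists i => //=.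
rewrite ltnNge; apply/negP => ni.
have : (n0 <= i)%N by apply: leq_trans ni; near: n; exact: nbhs_infty_ge.
by move/hn0 => e; rewrite e in Fi.
Unshelve. all: by end_near. Qed.

HB.instance Definition _ := isMeasure.Build _ (CT N) R lamE lamE0 lamE_ge0 lamE_sigma.


Definition nu (E : set (X N)) : \bar R := measure_extension lamE E.

Lemma cyl_clo : @cyl_gen N `<=` @clo N.
Proof. move=> C [m [w ->]]; exists m => a b ab ha; exact: agree_trans (agree_sym ab) ha. Qed.

Lemma gen_sub : (@measurable _ (X N)) `<=` <<s @clo N >>.
Proof.
apply: smallest_sub; first exact: smallest_sigma_algebra.
move=> C /cyl_clo h; exact: sub_sigma_algebra.
Qed.

Lemma gen_sup : <<s @clo N >> `<=` (@measurable _ (X N)).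
Proof.
apply: smallest_sub; first exact: sigma_algebra_measurable.
move=> C [j h]; exact (wdet_measurable h).
Qed.

Lemma genXN : (@measurable _ (X N)) = <<s @clo N >>.
Proof. by apply/seteqP; split; [exact: gen_sub|exact: gen_sup]. Qed.

Lemma nu0 : nu set0 = 0%E.
Proof. exact: measure0. Qed.

Lemma nu_ge0 E : (0 <= nu E)%E.
Proof. exact: measure_ge0. Qed.

Lemma nu_sigma : semi_sigma_additive nu.
Proof.
move=> F mF tF mUF.
exact: (@measure_semi_sigma_additive _ _ _ (measure_extension lamE) F
          (fun i => gen_sub (mF i)) tF (gen_sub mUF)).
Qed.

HB.instance Definition _ := isMeasure.Build _ (X N) R nu nu0 nu_ge0 nu_sigma.

Lemma nuE E : @clo N E -> nu E = (lm E)%:E.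
Proof. by move=> cE; rewrite /nu /measure_extension measurable_mu_extE. Qed.

Lemma nuT : nu setT = 1%E.
Proof. by rewrite nuE ?(lamT R hU y hT) //; exact: cloT. Qed.

HB.instance Definition _ := Measure_isProbability.Build _ (X N) R nu nuT.

Lemma sh_wdet j (E : set (X N)) : wdet j E -> wdet j.+1 (sh @^-1` E).
Proof. by move=> h; have := wdet_iter (k:=1) h; rewrite addn1. Qed.

Lemma sh_clo (E : set (X N)) : @clo N E -> @clo N (sh @^-1` E).
Proof. by move=> [j h]; exists j.+1; exact: sh_wdet. Qed.

Lemma measurable_sh : measurable_fun [set: X N] sh.
Proof.
apply: (@measurability _ _ (X N) (X N) setT sh (@cyl_gen N)) => //.
move=> _ [B cB <-]; rewrite setTI; apply: gen_sup; apply: sub_sigma_algebra.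
exact: sh_clo (cyl_clo cB).
Qed.

Definition nush (E : set (X N)) : \bar R := nu (sh @^-1` E).

Let nush0 : nush set0 = 0%E.
Proof. by rewrite /nush preimage_set0 measure0. Qed.

Let nush_ge0 E : (0 <= nush E)%E.
Proof. exact: measure_ge0. Qed.

Let nush_sigma : semi_sigma_additive nush.
Proof.
move=> F mF tF mUF; rewrite /nush preimage_bigcup.
apply: (@measure_semi_sigma_additive _ _ _ nu (fun i => sh @^-1` F i)).
- by move=> n; rewrite -[X in measurable X]setTI; exact: measurable_sh.
- apply/trivIsetP => /= i j _ _ ij; rewrite -preimage_setI.
  by move/trivIsetP : tF => /(_ _ _ _ _ ij) ->//; rewrite preimage_set0.
- by rewrite -preimage_bigcup -[X in measurable X]setTI; exact: measurable_sh.
Qed.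

HB.instance Definition _ := isMeasure.Build _ (X N) R nush nush0 nush_ge0 nush_sigma.

Lemma nu_invariant : shift_invariant nu.
Proof.
move=> E mE; symmetry.
apply: (@measure_unique _ _ (X N) (@clo N) (fun _ => setT) genXN _ _ _ nu nush) => //.
- by move=> A B; exact: cloI.
- by move=> _; exact: cloT.
- by apply/seteqP; split => // x _; exists 0%N.
- move=> A cA; change (nu A = nu (sh @^-1` A)); rewrite !nuE //; last exact: sh_clo.
  by rewrite -(lam_shift R hU hoo y hT A).
- by move=> _; change (nu setT < +oo)%E; rewrite nuT ltry.
Qed.

Variable L : nat.
Variable W : pred {ffun 'I_L -> 'I_N.+1}.
Variable A : set (X N).
Hypothesis hyS : forall k, SFT W (y k).
Variable c : R.
Hypothesis c0 : 0 < c.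
Variable ms : nat -> nat.
Hypothesis hms : forall k, (k <= ms k)%N.
Hypothesis hc : forall k, c * (T k)%:R <= (cnt (Dm (SFT W) A (ms k)) (y k) (T k))%:R.

Lemma Sn_clo n : @clo N (Sn W n).
Proof. by exists (n + L)%N; exact: wdet_Sn. Qed.

Lemma lam_Sn n : lm (Sn W n) = 1.
Proof.
rewrite /lam (_ : freq R y T (Sn W n) = fun _ => 1) ?ulim_cst //.
apply/funext => k; rewrite /freq.
have -> : cnt (Sn W n) (y k) (T k) = T k.
  rewrite /cnt (eq_bigr (fun _ => 1%N)); first by rewrite sum_nat_const_nat muln1 subn0.
  move=> i _; rewrite asboolT //.
  have : SFT W (iter i sh (y k)) by apply/S_iter; exact: hyS.
  by rewrite S_bigcap => /(_ n I).
by rewrite divff // pnatr_eq0 -lt0n (T_pos hT).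
Qed.

Lemma nu_S : nu (SFT W) = 1%E.
Proof.
have mS n : measurable (Sn W n) by apply: gen_sup; apply: sub_sigma_algebra; exact: Sn_clo.
have mI : measurable (\bigcap_n Sn W n) by apply: bigcapT_measurable.
have ni : nonincreasing_seq (Sn W).
  move=> n m nm; apply/subsetPset => x h i hi; apply: h; lia.
have F0 : (nu (Sn W 0%N) < +oo)%E.
  by rewrite nuE ?lam_Sn ?ltry //; exact: Sn_clo.
have h := @nonincreasing_cvg_mu _ (X N) R nu (Sn W) F0 mS mI ni.
rewrite S_bigcap.
have e : (nu \o Sn W) = fun _ => 1%E.
  by apply/funext => n /=; rewrite nuE ?lam_Sn //; exact: Sn_clo.
rewrite e in h.
exact: (cvg_unique _ h (cvg_cst _)).
Qed.

Lemma Dp_clo m : @clo N (Dp W A m).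
Proof. by exists m; exact: wdet_Dp. Qed.

Lemma lam_Dp m : c <= lm (Dp W A m).
Proof.
apply: (lam_ge hU hoo hT); near=> k.
have Tp : (0 : R) < (T k)%:R by rewrite ltr0n (T_pos hT).
rewrite /freq ler_pdivlMr //; apply: (le_trans (hc k)); rewrite ler_nat.
apply: cnt_sub => x /(Dm_anti (m:=m)) h.
have : Dm (SFT W) A m x by apply: h; apply: leq_trans (hms k); near: k; exact: nbhs_infty_ge.
by rewrite Dm_Dp => -[].
Unshelve. all: by end_near. Qed.

Lemma nu_bd : (c%:E <= nu (boundary_in (SFT W) A))%E.
Proof.
have mD m : measurable (Dp W A m) by apply: gen_sup; apply: sub_sigma_algebra; exact: Dp_clo.
have mI : measurable (\bigcap_m Dp W A m) by apply: bigcapT_measurable.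
have ni : nonincreasing_seq (Dp W A).
  move=> n m nm; apply/subsetPset; exact: Dp_anti.
have F0 : (nu (Dp W A 0%N) < +oo)%E.
  by rewrite nuE ?ltry //; exact: Dp_clo.
have h := @nonincreasing_cvg_mu _ (X N) R nu (Dp W A) F0 mD mI ni.
have cZ : (c%:E <= nu (\bigcap_m Dp W A m))%E.
  rewrite -(cvg_lim (@ereal_hausdorff R) h); apply: (lime_ge (f := nu \o Dp W A)); first by apply/cvg_ex; eexists; exact: h.
  by apply: nearW => m /=; rewrite nuE ?lee_fin ?lam_Dp //; exact: Dp_clo.
have eB : boundary_in (SFT W) A = \bigcap_m Dp W A m `&` SFT W.
  rewrite boundary_bigcap; apply/seteqP; split.
    by move=> x hx; split; [move=> m _; have := hx m I; rewrite Dm_Dp => -[]|have := hx 0%N I; rewrite Dm_Dp => -[]].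
  by move=> x [hx Sx] m _; rewrite Dm_Dp; split => //; exact: hx.
have mS : measurable (SFT W) by apply: measurable_S.
rewrite eB; move: cZ; rewrite (measureDI nu mI mS) /=.
suff -> : nu (\bigcap_m Dp W A m `\` SFT W) = 0%E by rewrite add0e.
apply/eqP; rewrite eq_le measure_ge0 andbT.
have -> : (0%E : \bar R) = nu (~` SFT W).
  by rewrite (probability_setC nu mS) /= nu_S subee.
apply: le_measure; rewrite ?inE.
- by apply: measurableD.
- exact: measurableC.
- by move=> x [].
Qed.

Lemma nuP_all : exists P : probability (X N) R,
  [/\ shift_invariant P, P (SFT W) = 1%E & (c%:E <= P (boundary_in (SFT W) A))%E].
Proof.
exists (nu : probability (X N) R); split.
- exact: nu_invariant.
- exact: nu_S.
- exact: nu_bd.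
Qed.

End P7.

Unset Implicit Arguments.
Set Strict Implicit.
Set Printing Implicit Defensive.

Lemma lemA (R : realType) (N : nat) (mu : probability (X N) R) (D : set (X N)) (v : R) :
  (exists n0, forall n, (n0 <= n)%N -> mu (ret_le D n v) = 0%E) ->
  ((fun n : nat => (n%:R^-1)%:E * elog (mu (ret_le D n v)))%E @ \oo --> -oo%E).
Proof.
move=> [n0 h]; apply: cvg_near_cst; near=> n.
rewrite h; last by near: n; exact: nbhs_infty_ge.
rewrite /elog eqxx gt0_muleNy // lte_fin invr_gt0 ltr0n.
by near: n; exact: nbhs_infty_ge.
Unshelve. all: by end_near. Qed.

Lemma lemB (R : realType) (N : nat) (mu : probability (X N) R) (S D : set (X N)) (v : R) n :
  measurable S -> mu S = 1%E -> measurable (ret_le D n v) ->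
  mu (ret_le D n v) <> 0%E -> exists x, S x /\ ret_le D n v x.
Proof.
move=> mS muS mE h; apply: contrapT => hn; apply: h.
apply/eqP; rewrite eq_le measure_ge0 andbT.
have -> : (0%E : \bar R) = mu (~` S).
  by rewrite (probability_setC mu mS) /= muS subee.
apply: le_measure; rewrite ?inE //; first exact: measurableC.
by move=> x Ex Sx; apply: hn; exists x.
Qed.

Theorem proposition6p2 (R : realType) (N L : nat) (W : pred {ffun 'I_L -> 'I_N.+1})
  (phi : X N -> R) (mu : probability (X N) R) (A : set (X N)) :
  mixing (SFT W) ->
  holder (SFT W) phi ->
  equilibrium_state (SFT W) phi mu ->
  open_in (SFT W) A ->
  (forall nu : probability (X N) R, shift_invariant nu -> nu (SFT W) = 1%E ->
     nu (boundary_in (SFT W) A) = 0%E) ->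
  forall v : R, 0 < v -> exists M : nat, forall m : nat, (M <= m)%N ->
    ((fun n : nat => (n%:R^-1)%:E * elog (mu (ret_le (Dm (SFT W) A m) n v)))%E
       @ \oo --> -oo%E).
Proof.
move=> _ _ [_ [muS _]] _ hbd v v0.
apply: contrapT => hn.
have step : forall k : nat, exists mxt : nat * X N * nat * nat,
    [/\ (k <= mxt.1.1.1)%N, SFT W mxt.1.1.2, (k < mxt.2)%N,
        ret_iter (Dm (SFT W) A mxt.1.1.1) mxt.2 mxt.1.1.2 = Some mxt.1.2
      & mxt.1.2%:R <= v * mxt.2%:R].
  move=> k.
  have [m [km hm]] : exists m, (k <= m)%N /\
      ~ ((fun n : nat => (n%:R^-1)%:E * elog (mu (ret_le (Dm (SFT W) A m) n v)))%E
          @ \oo --> -oo%E).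
    apply: contrapT => h; apply: hn; exists k => m km; apply: contrapT => hm.
    by apply: h; exists m.
  have [n [kn hmu]] : exists n, (k < n)%N /\ mu (ret_le (Dm (SFT W) A m) n v) <> 0%E.
    apply: contrapT => h; apply: hm; apply: lemA; exists k.+1 => n kn.
    by apply: contrapT => hmu; apply: h; exists n.
  have mE : measurable (ret_le (Dm (SFT W) A m) n v).
    exact (measurable_ret_le (fun k => measurable_Dm_iter W A m k) n v).
  have [x [Sx [t [et tv]]]] := lemB _ _ _ _ _ _ _ (measurable_S W) muS mE hmu.
  by exists (m, x, t, n).
have [f hf] := choice step.
pose ms k := (f k).1.1.1.
pose y k := (f k).1.1.2.
pose T k := ((f k).1.2).+1.
pose c : R := (v + 1)^-1.
have c0 : 0 < c by rewrite invr_gt0; lra.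
have hms k : (k <= ms k)%N by case: (hf k).
have hyS k : SFT W (y k) by case: (hf k).
have hcnt k : ((f k).2 <= cnt (Dm (SFT W) A (ms k)) (y k) (T k))%N.
  by case: (hf k) => _ _ _ e _; exact: ret_iter_cnt e.
have hT k : (k < T k)%N.
  case: (hf k) => _ _ kn _ _; apply: (leq_trans kn).
  apply: (leq_trans (hcnt k)); exact: cnt_le.
have hc k : c * (T k)%:R <= (cnt (Dm (SFT W) A (ms k)) (y k) (T k))%:R.
  case: (hf k) => _ _ kn _ tv.
  apply: (le_trans (y := ((f k).2)%:R)); last by rewrite ler_nat; exact: hcnt.
  rewrite /c /T mulrC ler_pdivrMr; last lra.
  have n1 : (1 : R) <= ((f k).2)%:R by rewrite ler1n; exact: leq_ltn_trans kn.
  rewrite -natr1; lra.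
have [U [hU hoo]] := exists_ultra.
have [P [Pinv PS Pbd]] := nuP_all hU hoo hT hyS c0 hms hc.
have := hbd P Pinv PS; move: Pbd => /[swap] ->; rewrite lee_fin; lra.
Qed.
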